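(* Let $Z=\operatorname{diag}(z_1,\dots,z_N)$ with distinct real $z_i$, and let $\bm w_1,\bm w_2,\bm v_1\in\mathbb{R}^N$ satisfy $\bm w_1^T\bm v_1=1$, $\bm w_2^T\bm v_1=0$, $\bm w_2^TZ\bm v_1=1$. Suppose there exist $V=[\bm v_1,\dots,\bm v_N]$, $W=[\bm w_1,\dots,\bm w_N]\in\mathbb{R}^{N\times N}$ (with the given first columns $\bm v_1$ and $\bm w_1,\bm w_2$) and $H\in\mathbb{R}^{N\times N}$ with $H_{i,i}=b_{i-1}$, $H_{i+1,i}=1$, $H_{i,i+1}=c_i$, $H_{i,i+2}=d_{i+1}$ and all other entries zero, such that $W^TZV=H$ and $W^TV=I_N$. Assume moreover $d_n\neq0$ for $n=2,\dots,N-1$. Then for every $m\le N$, $\{\bm v_i\}_{i=1}^m$ is a basis of $\mathcal K_m(Z,\bm v_1)$ and $\{\bm w_i\}_{i=1}^m$ is a basis of $\mathcal K_m^{\square}(Z,[\bm w_1,\bm w_2])$.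
   Context: Krylov subspace: $\mathcal K_m(M,\bm v)=\operatorname{span}\{\bm v,M\bm v,\dots,M^{m-1}\bm v\}$. Block Krylov subspace with two starting vectors: $\mathcal K_m^{\square}(M,[\bm w_1,\bm w_2])=\mathcal K_k(M,\bm w_1)+\mathcal K_k(M,\bm w_2)$ if $m=2k$, and $=\mathcal K_{k+1}(M,\bm w_1)+\mathcal K_k(M,\bm w_2)$ if $m=2k+1$ (with $\mathcal K_0=\{0\}$). *)

(* Defs.v *)
From HB Require Import structures.
From mathcomp Require Import all_boot all_order all_algebra.
Set Implicit Arguments. Unset Strict Implicit. Unset Printing Implicit Defensive.
Import Order.TTheory GRing.Theory Num.Theory.
Local Open Scope ring_scope.

Section Krylov.
Variables (R : fieldType) (N : nat).

(* The m x N matrix whose i-th row is (M^i v)^T, i = 0..m-1; its row space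
   (mxalgebra, %MS) is the Krylov subspace K_m(M, v). *)
Definition krylov (M : 'M[R]_N) (v : 'cV[R]_N) (m : nat) : 'M[R]_(m, N) :=
  \matrix_(i < m) (M ^+ i *m v)^T.

(* Block Krylov subspace K_m^box(M,[w1,w2]) = K_{ceil(m/2)}(M,w1) + K_{floor(m/2)}(M,w2),
   given as a matrix whose rows span it. *)
Definition block_krylov (M : 'M[R]_N) (w1 w2 : 'cV[R]_N) (m : nat)
  : 'M[R]_(uphalf m + m./2, N) :=
  col_mx (krylov M w1 (uphalf m)) (krylov M w2 m./2).

Definition firstcols (m : nat) (hm : (m <= N)%N) (A : 'M[R]_N) : 'M[R]_(m, N) :=
  rowsub (widen_ord hm) A^T.

Definition is_basis_of (m k : nat) (B : 'M[R]_(m, N)) (S : 'M[R]_(k, N)) : Prop :=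
  row_free B /\ (B == S)%MS.

End Krylov.

(* Main.v *)
Require Import Defs.
From HB Require Import structures.
From mathcomp Require Import all_boot all_order all_algebra.
Import Order.TTheory GRing.Theory Num.Theory.
Local Open Scope ring_scope.
From mathcomp Require Import zify.

Section Gen.
Variables (R : fieldType) (N : nat) (A Z : 'M[R]_N) (h : 'I_N -> 'I_N -> R)
  (s : nat) (G : nat -> 'M[R]_N).
Hypothesis hrel : forall j, row j A *m Z = \sum_i h j i *: row i A.
Hypothesis hs : (0 < s)%N.
Hypothesis hzero : forall j i : 'I_N, (j + s < i)%N -> h j i = 0.
Hypothesis hlead : forall j i : 'I_N, (i : nat) = (j + s)%N -> h j i != 0.
Hypothesis hmono : forall m, (G m <= G m.+1)%MS.
Hypothesis hstab : forall m (u : 'rV[R]_N), (u <= G m)%MS -> (u *m Z <= G (m + s)%N)%MS.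
Hypothesis hbase : forall i : 'I_N, (i < s)%N -> (row i A <= G i.+1)%MS.

Lemma Gmono m n : (m <= n)%N -> (G m <= G n)%MS.
Proof.
move=> /subnK <-; elim: (n - m)%N => [|k IH] //.
by rewrite addSn; apply: submx_trans IH (hmono _).
Qed.

Lemma gen_sub : forall i : 'I_N, (row i A <= G i.+1)%MS.
Proof.
suff H : forall k (i : 'I_N), (i < k)%N -> (row i A <= G i.+1)%MS.
  by move=> i; apply: (H i.+1).
elim=> [|k IH] i hik //.
case: (ltnP i k) => hik'; first exact: IH.
have ek : (i : nat) = k by apply/eqP; rewrite eqn_leq hik' andbT -ltnS.
case: (ltnP i s) => his; first exact: hbase.
have hj : (i - s < N)%N by apply: leq_ltn_trans (ltn_ord i); apply: leq_subr.
set j := Ordinal hj.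
have eji : (i : nat) = (j + s)%N by rewrite /= subnK.
have hne := hlead j i eji.
have Hr := hrel j.
rewrite (bigD1 i) //= in Hr.
have -> : row i A = (h j i)^-1 *: (row j A *m Z - \sum_(k0 | k0 != i) h j k0 *: row k0 A).
  by rewrite Hr addrK scalerA mulVf // scale1r.
apply: scalemx_sub; apply: addmx_sub.
  have := hstab _ _ (IH j _); rewrite addSn -eji; apply.
  by rewrite /= -ek ltn_subrL hs (leq_trans hs his).
rewrite -scaleN1r; apply: scalemx_sub; apply: summx_sub => k0 hk0.
case: (ltnP k0 i) => hk0i.
  apply: scalemx_sub; apply: submx_trans (IH k0 _) (Gmono _ _ _).
    by rewrite -ek.
  exact: ltnW.
rewrite hzero ?scale0r ?sub0mx //.
by rewrite -eji ltn_neqAle hk0i andbT eq_sym; apply: contra hk0; move/eqP => e; apply/eqP/val_inj.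
Qed.
End Gen.

Section K.
Variables (R : fieldType) (N : nat) (Z : 'M[R]_N).
Hypothesis ZT : Z^T = Z.

Lemma krylov_row (v : 'cV[R]_N) a (i : 'I_a) : row i (krylov Z v a) = (Z ^+ i *m v)^T.
Proof. by rewrite /krylov rowK. Qed.

Lemma krylov_shift v a b : (a < b)%N -> (krylov Z v a *m Z <= krylov Z v b)%MS.
Proof.
move=> hab; apply/row_subP => i; rewrite row_mul krylov_row.
have hi : (i.+1 < b)%N by apply: leq_trans hab; rewrite ltnS.
apply: (@eq_row_sub _ _ _ _ _ (Ordinal hi)).
rewrite krylov_row /= exprS -mulmxE -mulmxA trmx_mul ZT //.
Qed.

Lemma krylov_mono v a b : (a <= b)%N -> (krylov Z v a <= krylov Z v b)%MS.
Proof.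
move=> hab; apply/row_subP => i; rewrite krylov_row.
have hi : (i < b)%N by apply: leq_trans hab.
by apply: (@eq_row_sub _ _ _ _ _ (Ordinal hi)); rewrite krylov_row.
Qed.

Lemma stab_of m1 m2 (A : 'M[R]_(m1, N)) (B : 'M[R]_(m2, N)) (u : 'rV_N) :
  (A *m Z <= B)%MS -> (u <= A)%MS -> (u *m Z <= B)%MS.
Proof. by move=> hAB /submxP [D ->]; rewrite -mulmxA mulmx_sub. Qed.

Lemma block_mono w1 w2 a b : (a <= b)%N ->
  (block_krylov Z w1 w2 a <= block_krylov Z w1 w2 b)%MS.
Proof.
move=> hab; rewrite /block_krylov col_mx_sub; apply/andP; split.
  apply: submx_trans (krylov_mono _ _ _ (uphalf_leq hab)) _.
  by rewrite -addsmxE addsmxSl.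
apply: submx_trans (krylov_mono _ _ _ (half_leq hab)) _.
by rewrite -addsmxE addsmxSr.
Qed.

Lemma block_shift w1 w2 a : 
  (block_krylov Z w1 w2 a *m Z <= block_krylov Z w1 w2 (a + 2))%MS.
Proof.
rewrite /block_krylov mul_col_mx col_mx_sub; apply/andP; split.
  apply: submx_trans (krylov_shift w1 (uphalf a) (uphalf (a + 2)) _) _.
    by rewrite addn2 /=.
  by rewrite -addsmxE addsmxSl.
apply: submx_trans (krylov_shift w2 a./2 (a + 2)./2 _) _.
  by rewrite addn2 /=.
by rewrite -addsmxE addsmxSr.
Qed.

Lemma block_rank w1 w2 a : (\rank (block_krylov Z w1 w2 a) <= a)%N.
Proof.
apply: leq_trans (rank_leq_row _) _.
by rewrite uphalf_half -addnA addnn odd_double_half.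
Qed.

Lemma krylov_rank v a : (\rank (krylov Z v a) <= a)%N.
Proof. exact: rank_leq_row. Qed.
End K.

Lemma rowsub_colsub (R : fieldType) (N m : nat) (f : 'I_m -> 'I_N) (A B : 'M[R]_N) :
  rowsub f A *m colsub f B = mxsub f f (A *m B).
Proof. by apply/matrixP => i j; rewrite !mxE; apply: eq_bigr => k _; rewrite !mxE. Qed.

Lemma final_basis (R : fieldType) (N : nat) (A B : 'M[R]_N) (AB : A *m B = 1%:M)
  k (S : 'M[R]_(k, N)) m (hm : (m <= N)%N) (G : nat -> 'M[R]_N)
  (hG : forall i : 'I_N, (row i A <= G i.+1)%MS)
  (hmono : forall a b, (a <= b)%N -> (G a <= G b)%MS)
  (hGS : (G m <= S)%MS) (hrank : (\rank S <= m)%N) :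
  is_basis_of (rowsub (widen_ord hm) A) S.
Proof.
have hfree : row_free (rowsub (widen_ord hm) A).
  apply/row_freeP; exists (colsub (widen_ord hm) B).
  rewrite rowsub_colsub AB; apply/matrixP => i j; rewrite !mxE.
  by congr (_%:R); congr nat_of_bool.
split => //.
have sub : (rowsub (widen_ord hm) A <= S)%MS.
  apply/row_subP => i; rewrite row_rowsub.
  apply: submx_trans (hG _) (submx_trans (hmono _ _ _) hGS).
  by rewrite /=; apply: ltn_ord.
rewrite -(geq_leqif (mxrank_leqif_eq sub)).
by move/eqP: hfree => ->.
Qed.

Theorem proposition4p1 (R : realFieldType) (N : nat) (hN : (1 < N)%N)
  (z : 'rV[R]_N) (V W H : 'M[R]_N) (b c d : nat -> R) :
  (* distinct z_i, Z = diag(z_1,...,z_N) *)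
  (forall i j : 'I_N, z 0 i = z 0 j -> i = j) ->
  let Z := diag_mx z in
  let v1 := col (Ordinal (ltnW hN)) V in
  let w1 := col (Ordinal (ltnW hN)) W in
  let w2 := col (Ordinal hN) W in
  (w1^T *m v1) 0 0 = 1 ->
  (w2^T *m v1) 0 0 = 0 ->
  (w2^T *m Z *m v1) 0 0 = 1 ->
  (* 0-based: H_{k,k} = b_k, H_{k+1,k} = 1, H_{k,k+1} = c_{k+1}, H_{k,k+2} = d_{k+2} *)
  H = \matrix_(i < N, j < N)
        (if (j == i :> nat) then b i
         else if (i == j.+1 :> nat) then 1
         else if (j == i.+1 :> nat) then c i.+1
         else if (j == i.+2 :> nat) then d i.+2
         else 0) ->
  W^T *m Z *m V = H ->
  W^T *m V = 1%:M ->
  (forall n : nat, (2 <= n)%N -> (n <= N.-1)%N -> d n != 0) ->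
  forall (m : nat) (hm : (m <= N)%N),
    is_basis_of (firstcols hm V) (krylov Z v1 m) /\
    is_basis_of (firstcols hm W) (block_krylov Z w1 w2 m).
Proof.
move=> hz Z v1 w1 w2 e1 e2 e3 hH hWZV hWV hd m hm.
have hVW : V *m W^T = 1%:M := mulmx1C hWV.
have ZT : Z^T = Z := tr_diag_mx z.
have hZV : Z *m V = V *m H by rewrite -hWZV !mulmxA hVW mul1mx.
have hWZ : W^T *m Z = H *m W^T by rewrite -hWZV -!mulmxA hVW mulmx1.
have hVZ : V^T *m Z = H^T *m V^T by rewrite -{1}ZT -trmx_mul hZV trmx_mul.
split.
  have hG := @gen_sub R N V^T Z (fun j i => H i j) 1 (fun a => <<krylov Z v1 a>>%MS).
  have hGV : forall i : 'I_N, (row i V^T <= <<krylov Z v1 i.+1>>)%MS.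
    apply: hG => //.
    - move=> j; rewrite -row_mul hVZ row_mul mulmx_sum_row.
      by apply: eq_bigr => i _; rewrite !mxE.
    - move=> j i hji; rewrite hH mxE.
      do 4 (rewrite ifF; last by apply/negbTE/eqP; lia).
      by [].
    - move=> j i hji; rewrite hH mxE.
      rewrite ifF; last by apply/negbTE/eqP; lia.
      rewrite ifT; last by apply/eqP; lia.
      exact: oner_neq0.
    - by move=> a; rewrite !genmxE; apply: krylov_mono.
    - move=> a u; rewrite !genmxE; apply: stab_of.
      by apply: krylov_shift => //; rewrite addn1.
    - move=> i; rewrite ltnS leqn0 => /eqP i0; rewrite genmxE.
      apply: (@eq_row_sub _ _ _ _ _ ord0).
      rewrite krylov_row /= expr0 mul1mx /v1 -tr_col; congr (col _ V)^T.
      by apply: val_inj.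
  rewrite /firstcols; apply: (@final_basis _ _ V^T W _ _ _ m hm (fun a => <<krylov Z v1 a>>%MS)) => //.
  - by rewrite -[W]trmxK -trmx_mul hWV trmx1.
  - by move=> a a' haa; rewrite !genmxE; apply: krylov_mono.
  - by rewrite genmxE.
  - exact: krylov_rank.
have hG := @gen_sub R N W^T Z (fun j i => H j i) 2 (fun a => <<block_krylov Z w1 w2 a>>%MS).
have hGW : forall i : 'I_N, (row i W^T <= <<block_krylov Z w1 w2 i.+1>>)%MS.
  apply: hG => //.
  - move=> j; rewrite -row_mul hWZ row_mul mulmx_sum_row.
    by apply: eq_bigr => i _; rewrite !mxE.
  - move=> j i hji; rewrite hH mxE.
    do 4 (rewrite ifF; last by apply/negbTE/eqP; lia).
    by [].
  - move=> j i hji; rewrite hH mxE.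
    do 3 (rewrite ifF; last by apply/negbTE/eqP; lia).
    rewrite ifT; last by apply/eqP; lia.
    apply: hd; first by rewrite ltnS.
    have := ltn_ord i; lia.
  - by move=> a; rewrite !genmxE; apply: block_mono.
  - move=> a u; rewrite !genmxE; apply: stab_of.
    exact: block_shift.
  - move=> i; rewrite genmxE /block_krylov -addsmxE.
    case: i => [[|[|i]] hi] //= _.
      apply: submx_trans (addsmxSl _ _).
      apply: (@eq_row_sub _ _ _ _ _ ord0).
      rewrite krylov_row /= expr0 mul1mx /w1 -tr_col; congr (col _ W)^T.
      by apply: val_inj.
    apply: submx_trans (addsmxSr _ _).
    apply: (@eq_row_sub _ _ _ _ _ ord0).
    rewrite krylov_row /= expr0 mul1mx /w2 -tr_col; congr (col _ W)^T.
    by apply: val_inj.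
rewrite /firstcols; apply: (@final_basis _ _ W^T V _ _ _ m hm (fun a => <<block_krylov Z w1 w2 a>>%MS)) => //.
- by move=> a a' haa; rewrite !genmxE; apply: block_mono.
- by rewrite genmxE.
- exact: block_rank.
Qed.
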